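(* The generating function of the Stern polynomials satisfies $$\sum_{n=0}^{\infty}B_n(t)x^{n}=x\prod_{k=0}^{\infty}\bigl(1+tx^{2^{k}}+x^{2^{k+1}}\bigr)$$ as formal power series in $x$ with coefficients in $\mathbb{Z}[t]$; moreover, for every real $t$ and every real $x$ with $|x|<1$, both the series and the infinite product converge and are equal.
   Context: The Stern polynomials $B_n(t)\in\mathbb{Z}[t]$, $n\ge 0$, are defined by $B_0(t)=0$, $B_1(t)=1$, $B_{2n}(t)=tB_n(t)$ and $B_{2n+1}(t)=B_n(t)+B_{n+1}(t)$ for $n\ge 1$. *)

(* Defs.v *)
From HB Require Import structures.
From mathcomp Require Import all_boot all_order all_algebra.
From Stdlib Require Import ZArith Reals.
Set Implicit Arguments. Unset Strict Implicit. Unset Printing Implicit Defensive.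
Import GRing.Theory.

Section MC.
Local Open Scope ring_scope.

(* A fuel argument makes the (non-structural) recursion definable;
   fuel n.+1 is always sufficient for index n. *)
Fixpoint stern_aux (fuel n : nat) : {poly int} :=
  match fuel with
  | 0 => 0
  | f.+1 =>
    if n == 0 then 0 else
    if n == 1 then 1 else
    if odd n then (stern_aux f n./2 + stern_aux f n./2.+1)
    else ('X * stern_aux f n./2)
  end.

Definition stern (n : nat) : {poly int} := stern_aux n.+1 n.

(* Formal side: the truncated product  x * prod_{k<K} (1 + t x^(2^k) + x^(2^(k+1)))
   in Z[t][x] = {poly {poly int}}; outer 'X is x, inner ('X)%:P is t. *)
Definition stern_factor (k : nat) : {poly {poly int}} :=
  (1 + ('X)%:P * 'X^(2 ^ k) + 'X^(2 ^ k.+1)).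

Definition stern_partial_prod (K : nat) : {poly {poly int}} :=
  ('X * \prod_(k < K) stern_factor k).

End MC.

Definition int_to_Z (c : int) : Z :=
  match c with
  | Posz n => Z.of_nat n
  | Negz n => (- (Z.of_nat n + 1))%Z
  end.

Definition evalR (p : {poly int}) (t : R) : R :=
  foldr (fun c acc => (IZR (int_to_Z c) + t * acc)%R) 0%R (polyseq p).

Fixpoint stern_prodR (t x : R) (K : nat) : R :=
  match K with
  | 0 => 1%R
  | K'.+1 => (stern_prodR t x K' *
              (1 + t * x ^ (Nat.pow 2 K') + x ^ (Nat.pow 2 K'.+1)))%R
  end.

(* Main.v *)
Require Import Defs.
From HB Require Import structures.
From mathcomp Require Import all_boot all_order all_algebra.
From mathcomp Require Import zify ring.
From mathcomp Require Import Rstruct.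
From Stdlib Require Import ZArith Reals Lra.
Set Implicit Arguments. Unset Strict Implicit. Unset Printing Implicit Defensive.
Import GRing.Theory Num.Theory.
Local Open Scope ring_scope.

Lemma stern_aux_fuel f1 f2 n : (n < f1)%nat -> (n < f2)%nat ->
  stern_aux f1 n = stern_aux f2 n.
Proof.
elim: f1 f2 n => [|f1 IH] f2 n h1 h2; first by [].
case: f2 h2 => [|f2] h2; first by [].
rewrite /=.
case: (n =P 0%N) => // /eqP n0; case: (n =P 1%N) => // /eqP n1.
case: ifP => on.
- rewrite (IH f2 n./2) ?(IH f2 n./2.+1) //; lia.
- rewrite (IH f2 n./2) //; lia.
Qed.

Lemma stern_auxE f n : (n < f)%nat -> stern_aux f n = stern n.
Proof. by move=> h; apply: stern_aux_fuel. Qed.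

Lemma stern0 : stern 0 = 0. Proof. by []. Qed.
Lemma stern1 : stern 1 = 1. Proof. by []. Qed.

Lemma stern_auxS f n : stern_aux f.+1 n =
  if n == 0%nat then 0 else if n == 1%nat then 1 else
  if odd n then (stern_aux f n./2 + stern_aux f n./2.+1) else ('X * stern_aux f n./2).
Proof. by []. Qed.

Lemma sternE2 m : stern (2 * m)%nat = ('X * stern m).
Proof.
case: m => [|m]; first by rewrite muln0 stern0 mulr0.
rewrite /stern stern_auxS.
have -> : (2 * m.+1 == 0)%nat = false by lia.
have -> : (2 * m.+1 == 1)%nat = false by lia.
have -> : odd (2 * m.+1)%nat = false by rewrite ssrnat.oddM.
have -> : (2 * m.+1)%nat./2 = m.+1 by lia.
by rewrite stern_auxE //; lia.
Qed.

Lemma sternE2S m : stern (2 * m)%nat.+1 = (stern m + stern m.+1).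
Proof.
case: m => [|m]; first by rewrite stern0 add0r.
rewrite /stern stern_auxS.
have -> : ((2 * m.+1).+1 == 0)%nat = false by lia.
have -> : ((2 * m.+1).+1 == 1)%nat = false by lia.
have -> : odd (2 * m.+1)%nat.+1 = true by rewrite oddS ssrnat.oddM.
have -> : (2 * m.+1)%nat.+1./2 = m.+1 by lia.
by rewrite !stern_auxE //; lia.
Qed.

Lemma powE k : Nat.pow 2 k = expn 2 k.
Proof. elim: k => // k IH; rewrite expnS -IH /= mulnE; lia. Qed.

Lemma comp_poly1' (q : {poly {poly int}}) : 1 \Po q = 1.
Proof. exact: (comp_poly_multiplicative q).2. Qed.

Lemma factor_comp k : stern_factor k \Po 'X^2 = stern_factor k.+1.
Proof.
rewrite /stern_factor !comp_polyD comp_polyM !comp_polyC !comp_Xn_poly polyC1.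
by rewrite !powE -!exprM -!expnS.
Qed.

Lemma prod_comp K : (\prod_(k < K) stern_factor k) \Po 'X^2 =
  \prod_(k < K) stern_factor k.+1.
Proof.
elim: K => [|K IH]; first by rewrite !big_ord0 comp_poly1'.
by rewrite !big_ord_recr /= comp_polyM IH factor_comp.
Qed.

Lemma Q_rec K : stern_partial_prod K.+1 * 'X =
  stern_factor 0 * (stern_partial_prod K \Po 'X^2).
Proof.
rewrite /stern_partial_prod comp_polyM prod_comp comp_polyX big_ord_recl /=.
have -> : \prod_(i < K) stern_factor (lift ord0 i) = \prod_(k < K) stern_factor k.+1.
  by apply: eq_bigr => i _.
by rewrite expr2 -!mulrA mulrCA; congr (_ * _); rewrite (mulrC _ 'X).
Qed.

Definition sel K n := if (n <= expn 2 K)%nat then n else (expn 2 K.+1 - n)%nat.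

Lemma sel_even K m : sel K.+1 (2 * m) = (2 * sel K m)%nat.
Proof. rewrite /sel !expnS; case: (leqP m (expn 2 K)); case: (leqP (2 * m) (2 * expn 2 K)); lia. Qed.

Lemma coefQ K n : (stern_partial_prod K)`_n = stern (sel K n).
Proof.
elim: K n => [|K IH] n.
  rewrite /stern_partial_prod big_ord0 mulr1 coefX /sel.
  by case: n => [|[|n]] //=.
have h := congr1 (fun p : {poly {poly int}} => p`_n.+1) (Q_rec K).
rewrite /= coefMX /= in h; rewrite h.
rewrite /stern_factor /= expr1 !mulrDl mul1r -mulrA coefD coefD coefCM coefXM.
rewrite coefXnM !coef_comp_poly_Xn //=.
have [m [->|->]] : exists m, n = (2 * m)%nat \/ n = (2 * m).+1.
  exists n./2; rewrite -{1 3}(odd_double_half n); case: (odd n); [right|left]; lia.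
- have -> : (2 %| (2 * m).+1)%nat = false by rewrite dvdn2 oddS ssrnat.oddM.
  have -> : (2 %| (2 * m))%nat by rewrite dvdn2 ssrnat.oddM.
  rewrite add0r mulKn //.
  case: m => [|m].
    by rewrite muln0 IH /sel !leq0n stern0 mulr0 add0r /=.
  have -> : ((2 * m.+1).+1 < 2)%nat = false by lia.
  have -> : ((2 * m.+1).+1 - 2 = 2 * m + 1)%nat by lia.
  have -> : (2 %| 2 * m + 1)%nat = false by rewrite dvdn2 addn1 oddS ssrnat.oddM.
  by rewrite addr0 IH -sternE2 sel_even.
- have -> : (2 %| (2 * m).+2)%nat by rewrite dvdn2 /= ssrnat.oddM.
  have -> : (2 %| (2 * m).+1)%nat = false by rewrite dvdn2 oddS ssrnat.oddM.
  have -> : ((2 * m).+2 < 2)%nat = false by lia.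
  have -> : ((2 * m).+2 - 2 = 2 * m)%nat by lia.
  have -> : (2 %| 2 * m)%nat by rewrite dvdn2 ssrnat.oddM.
  have -> : ((2 * m).+2 %/ 2 = m.+1)%nat by lia.
  rewrite mulKn // mulr0 addr0 !IH.
  rewrite /sel !expnS.
  set M := expn 2 K.
  have [hm|hm] : (m < M \/ M <= m)%nat by lia.
    have -> : ((2 * m).+1 <= 2 * M)%nat by lia.
    have -> : (m <= M)%nat by lia.
    have -> : (m.+1 <= M)%nat by lia.
    by rewrite sternE2S addrC.
  have -> : ((2 * m).+1 <= 2 * M)%nat = false by lia.
  have -> : (m.+1 <= M)%nat = false by lia.
  have [hm2|hm2] : (m < 2 * M \/ 2 * M <= m)%nat by lia.
    have -> : (2 * (2 * M) - (2 * m).+1 = (2 * (2 * M - m - 1)).+1)%nat by lia.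
    rewrite sternE2S.
    have -> : ((2 * M - m - 1).+1 = 2 * M - m)%nat by lia.
    case: (m =P M) => [->|/eqP ne]; first by rewrite leqnn; congr (stern _ + stern _); lia.
    have -> : (m <= M)%nat = false by lia.
    by congr (stern _ + stern _); lia.
  have -> : (2 * (2 * M) - (2 * m).+1 = 0)%nat by lia.
  have -> : (2 * M - m.+1 = 0)%nat by lia.
  have -> : (m <= M)%nat = false by lia.
  have -> : (2 * M - m = 0)%nat by lia.
  by rewrite stern0 addr0.
Qed.

Definition cfu (t : R) : commr_rmorph (intr : {rmorphism int -> R}) t :=
  fun a => mulrC _ _.
Notation phi t := (horner_morph (cfu t)).

Lemma IZR_intE (c : int) : IZR (int_to_Z c) = c%:~R.
Proof.
case: c => n /=.
  by rewrite -INR_IZR_INZ INRE.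
rewrite NegzE opp_IZR plus_IZR -INR_IZR_INZ INRE mulrNz /=.
by rewrite RoppE RplusE R1E natr1.
Qed.

Lemma evalR_phi (p : {poly int}) (t : R) : evalR p t = phi t p.
Proof.
rewrite /evalR /horner_morph map_polyE horner_Poly.
elim: (polyseq p) => [|c s IH] //=.
by rewrite IH IZR_intE RplusE RmultE addrC mulrC.
Qed.

Definition b (t : R) (n : nat) : R := evalR (stern n) t.

Lemma b0 t : b t 0 = 0. Proof. by rewrite /b evalR_phi stern0 rmorph0. Qed.
Lemma b1 t : b t 1 = 1. Proof. by rewrite /b evalR_phi stern1 rmorph1. Qed.
Lemma b_even t m : b t (2 * m)%nat = t * b t m.
Proof. by rewrite /b !evalR_phi sternE2 rmorphM /= horner_morphX. Qed.
Lemma b_odd t m : b t (2 * m)%nat.+1 = b t m + b t m.+1.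
Proof. by rewrite /b !evalR_phi sternE2S rmorphD. Qed.

Lemma prodQ t x K : (map_poly (phi t) (stern_partial_prod K)).[x] =
  x * stern_prodR t x K.
Proof.
rewrite /stern_partial_prod rmorphM rmorph_prod /= map_polyX hornerM horner_prod hornerX.
congr (_ * _).
elim: K => [|K IH]; first by rewrite big_ord0.
rewrite big_ord_recr IH.
have -> : stern_prodR t x K.+1 = stern_prodR t x K *
   (1 + t * x^+(expn 2 K) + x^+(expn 2 K.+1)) by rewrite -!RpowE -!powE.
congr (_ * _).
rewrite /stern_factor !powE !rmorphD rmorph1 rmorphM !hornerE.
rewrite /= !map_polyXn map_polyC !hornerE /= horner_morphX.
by [].
Qed.

Lemma coefQR t K i : (map_poly (phi t) (stern_partial_prod K))`_i = b t (sel K i).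
Proof. by rewrite coef_map coefQ /b evalR_phi. Qed.

Lemma b_ind (P : nat -> Prop) : P 0%nat -> P 1%nat ->
  (forall m, (0 < m)%nat -> P m -> P (2 * m)%nat) ->
  (forall m, (0 < m)%nat -> P m -> P m.+1 -> P (2 * m)%nat.+1) -> forall n, P n.
Proof.
move=> H0 H1 He Ho n.
elim: n {-2}n (leqnn n) => [|N IH] n hn.
  by have -> : n = 0%nat by lia.
have [m [em|em]] : exists m, n = (2 * m)%nat \/ n = (2 * m).+1.
  exists n./2; rewrite -{1 3}(odd_double_half n); case: (odd n); [right|left]; lia.
- case: m em => [|m] em; first by rewrite em muln0.
  rewrite em; apply: He => //; apply: IH; lia.
- case: m em => [|m] em; first by rewrite em muln0.
  rewrite em; apply: Ho => //; apply: IH; lia.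
Qed.

Local Close Scope ring_scope.
Local Open Scope R_scope.

Lemma b0R t : b t 0 = 0. Proof. exact: b0. Qed.
Lemma b1R t : b t 1 = 1. Proof. exact: b1. Qed.
Lemma b_evenR t m : b t (2 * m)%nat = t * b t m. Proof. exact: b_even. Qed.
Lemma b_oddR t m : b t (2 * m)%nat.+1 = b t m + b t m.+1. Proof. exact: b_odd. Qed.

Lemma b_nonneg s n : 0 <= s -> 0 <= b s n.
Proof.
move=> hs; elim/b_ind: n => [|||m _ h1 h2].
- rewrite b0R; lra.
- rewrite b1R; lra.
- move=> m _ h; rewrite b_evenR; apply: Rmult_le_pos => //.
- rewrite b_oddR; apply: Rplus_le_le_0_compat => //.
Qed.

Lemma b_abs t n : Rabs (b t n) <= b (Rabs t) n.
Proof.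
elim/b_ind: n => [|||m _ h1 h2].
- rewrite !b0R Rabs_R0; lra.
- rewrite !b1R Rabs_R1; lra.
- move=> m _ h; rewrite !b_evenR Rabs_mult.
  apply: Rmult_le_compat_l => //; apply: Rabs_pos.
- rewrite !b_oddR ; apply: Rle_trans (Rabs_triang _ _) _; lra.
Qed.

Lemma b_refl s K m : (m <= expn 2 K)%nat ->
  b s (expn 2 K + m) = b s (expn 2 K - m) + s * b s m.
Proof.
elim: K m => [|K IH] m hm.
  rewrite expn0 in hm *.
  case: m hm => [|[|m]] hm //.
    by rewrite addn0 subn0 b0R; ring.
  have -> : (1 + 1 = 2 * 1)%nat by [].
  by rewrite b_evenR b1R b0R; ring.
have [a [ea|ea]] : exists a, m = (2 * a)%nat \/ m = (2 * a).+1.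
  exists m./2; rewrite -{1 3}(odd_double_half m); case: (odd m); [right|left]; lia.
- rewrite ea expnS in hm *.
  have -> : (2 * expn 2 K + 2 * a = 2 * (expn 2 K + a))%nat by lia.
  have -> : (2 * expn 2 K - 2 * a = 2 * (expn 2 K - a))%nat by lia.
  rewrite !b_evenR IH; last by lia.
  ring.
- rewrite ea expnS in hm *.
  have -> : (2 * expn 2 K + (2 * a).+1 = (2 * (expn 2 K + a)).+1)%nat by lia.
  have -> : (2 * expn 2 K - (2 * a).+1 = (2 * (expn 2 K - a - 1)).+1)%nat by lia.
  rewrite !b_oddR.
  have -> : (expn 2 K + a).+1 = (expn 2 K + a.+1)%nat by lia.
  have -> : (expn 2 K - a - 1).+1 = (expn 2 K - a)%nat by lia.
  rewrite !IH; try lia.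
  have -> : (expn 2 K - a.+1 = expn 2 K - a - 1)%nat by lia.
  ring.
Qed.

Lemma b_sel s K i : 0 <= s -> b s (sel K i) <= b s i.
Proof.
move=> hs; rewrite /sel.
case: (leqP i (expn 2 K)) => h1; first lra.
case: (leqP i (expn 2 K.+1)) => h2.
  have -> : i = (expn 2 K + (i - expn 2 K))%nat by lia.
  rewrite b_refl; last by rewrite expnS in h2; lia.
  have -> : (expn 2 K.+1 - (expn 2 K + (i - expn 2 K)) = expn 2 K - (i - expn 2 K))%nat.
    by rewrite expnS; lia.
  have := Rmult_le_pos _ _ hs (b_nonneg (i - expn 2 K) hs); lra.
have -> : (expn 2 K.+1 - i = 0)%nat by lia.
rewrite b0R; exact: b_nonneg.
Qed.

Lemma powr_le r n m : 0 <= r <= 1 -> (n <= m)%nat -> r ^ m <= r ^ n.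
Proof.
move=> hr hnm; have -> : m = (n + (m - n))%nat by lia.
rewrite pow_add.
have h1 : r ^ (m - n) <= 1.
  have := pow_incr r 1 (m - n) hr; by rewrite pow1.
have h2 := pow_le r n (proj1 hr).
have h3 := pow_le r (m - n) (proj1 hr).
nra.
Qed.

Lemma K_le_pow K : (K <= Nat.pow 2 K)%nat.
Proof. rewrite powE; apply: ltnW; exact: ltn_expl. Qed.

Lemma prod_bound s r K : 0 <= s -> 0 <= r < 1 ->
  0 <= stern_prodR s r K <= exp ((s + 1) * (1 - r ^ K) / (1 - r)).
Proof.
move=> hs hr; elim: K => [|K [IH1 IH2]].
  rewrite /=.
  replace ((s + 1) * (1 - 1) / (1 - r)) with 0 by (field; lra); rewrite exp_0; lra.
change (stern_prodR s r K.+1) with (stern_prodR s r K *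
  (1 + s * r ^ (Nat.pow 2 K) + r ^ (Nat.pow 2 K.+1))).
have hr1 : 0 <= r <= 1 by lra.
have a1 := powr_le hr1 (K_le_pow K).
have a2 : r ^ Nat.pow 2 K.+1 <= r ^ K.
  apply: powr_le => //; apply: leq_trans (K_le_pow K.+1); lia.
have a3 := pow_le r (Nat.pow 2 K) (proj1 hr).
have a4 := pow_le r (Nat.pow 2 K.+1) (proj1 hr).
have a5 := pow_le r K (proj1 hr).
have hf : 1 <= 1 + s * r ^ (Nat.pow 2 K) + r ^ (Nat.pow 2 K.+1).
  have := Rmult_le_pos _ _ hs a3; lra.
have hf2 : 1 + s * r ^ (Nat.pow 2 K) + r ^ (Nat.pow 2 K.+1) <= exp ((s + 1) * r ^ K).
  apply: Rle_trans (exp_ineq1_le _); nra.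
split; first nra.
replace ((s + 1) * (1 - r ^ K.+1) / (1 - r)) with
  ((s + 1) * (1 - r ^ K) / (1 - r) + (s + 1) * r ^ K) by (rewrite /=; field; lra).
rewrite exp_plus; apply: Rmult_le_compat => //; lra.
Qed.

Lemma prod_bound' s r K : 0 <= s -> 0 <= r < 1 ->
  0 <= stern_prodR s r K <= exp ((s + 1) / (1 - r)).
Proof.
move=> hs hr; have [h1 h2] := prod_bound K hs hr; split => //.
apply: Rle_trans h2 _.
have a5 := pow_le r K (proj1 hr).
have : (s + 1) * (1 - r ^ K) / (1 - r) <= (s + 1) / (1 - r).
  rewrite /Rdiv; apply: Rmult_le_compat_r.
    apply: Rlt_le; apply: Rinv_0_lt_compat; lra.
  nra.
case/Rle_lt_or_eq_dec => h; last by rewrite h; lra.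
by apply: Rlt_le; apply: exp_increasing.
Qed.

Local Open Scope ring_scope.

Lemma sumR_bridge (F : nat -> R) n : \sum_(i < n.+1) F i = sum_f_R0 F n.
Proof.
elim: n => [|n IH]; first by rewrite big_ord1.
by rewrite big_ord_recr IH.
Qed.

Lemma split_Q t K y :
  (map_poly (phi t) (stern_partial_prod K)).[y] =
  sum_f_R0 (fun i => (b t i * y ^ i)%R) (expn 2 K) +
  \sum_((expn 2 K).+1 <= i < size (map_poly (phi t) (stern_partial_prod K)) + (expn 2 K).+1)
     b t (sel K i) * y ^+ i.
Proof.
rewrite (horner_coef_wide y (leq_addr (expn 2 K).+1 (size (map_poly (phi t) (stern_partial_prod K))))).
rewrite -(big_mkord xpredT (fun i => (map_poly (phi t) (stern_partial_prod K))`_i * y ^+ i)).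
rewrite (big_cat_nat (n:=(expn 2 K).+1) (leq0n _) (leq_addl _ _)) /=.
congr (_ + _); last by apply: eq_big_nat => i _; rewrite coefQR.
rewrite big_mkord -sumR_bridge; apply: eq_bigr => i _.
rewrite coefQR RpowE /sel.
by have -> : (i <= expn 2 K)%nat by have := ltn_ord i.
Qed.

Lemma normRE (x : R) : `|x| = Rabs x. Proof. by []. Qed.

Lemma psum_bound s r K : (0 <= s)%R -> (0 <= r < 1)%R ->
  (sum_f_R0 (fun i => b s i * r ^ i) (expn 2 K) <= r * stern_prodR s r K)%R.
Proof.
move=> hs hr; rewrite [X in (_ <= X)%R]RmultE -prodQ split_Q.
set T := (\sum_(_ <= i < _) _).
have hT : (0 <= T)%R.
  apply/RleP; apply: sumr_ge0 => i _; apply/RleP; rewrite -RpowE -RmultE.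
  apply: Rmult_le_pos; [exact: b_nonneg | apply: pow_le; lra].
rewrite -RplusE; lra.
Qed.

Lemma tail_bound t x K L :
  (forall n, sum_f_R0 (fun i => b (Rabs t) i * Rabs x ^ i) n <= L)%R ->
  (Rabs (x * stern_prodR t x K - sum_f_R0 (fun i => b t i * x ^ i) (expn 2 K))
   <= L - sum_f_R0 (fun i => b (Rabs t) i * Rabs x ^ i) (expn 2 K))%R.
Proof.
move=> hL; rewrite [X in Rabs (X - _)]RmultE -prodQ split_Q.
set p := map_poly (phi t) (stern_partial_prod K).
set A := (fun i => b (Rabs t) i * Rabs x ^ i)%R.
set T := (\sum_(_ <= i < _) _).
have -> : (sum_f_R0 (fun i => b t i * x ^ i) (expn 2 K) + T -
   sum_f_R0 (fun i => b t i * x ^ i) (expn 2 K))%R = T.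
  by rewrite RminusE addrC addKr.
have e1 : \sum_((expn 2 K).+1 <= i < size p + (expn 2 K).+1) A i =
   sum_f_R0 A (size p + expn 2 K) - sum_f_R0 A (expn 2 K).
  rewrite -!sumR_bridge -!(big_mkord xpredT A) addnS.
  rewrite [X in _ = X - _](big_cat_nat (n:=(expn 2 K).+1) (leq0n _)) /=; last by rewrite ltnS leq_addl.
  by rewrite -addnS addrC addrK.
have h1 : (Rabs T <= \sum_((expn 2 K).+1 <= i < size p + (expn 2 K).+1) A i)%R.
  have h0 := ler_norm_sum (index_iota (expn 2 K).+1 (size p + (expn 2 K).+1)) (fun i => b t (sel K i) * x ^+ i) xpredT.
  have h2 : (\sum_((expn 2 K).+1 <= i < size p + (expn 2 K).+1) `|b t (sel K i) * x ^+ i|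
     <= \sum_((expn 2 K).+1 <= i < size p + (expn 2 K).+1) A i)%O.
    apply: ler_sum => i _; apply/RleP; rewrite normRE -!RpowE -RmultE /A.
    rewrite Rabs_mult -RPow_abs; apply: Rmult_le_compat_r; first by apply: pow_le; exact: Rabs_pos.
    apply: Rle_trans (b_abs _ _) _; apply: b_sel; exact: Rabs_pos.
  move/RleP: h0; move/RleP: h2; rewrite normRE => h2 h0.
  exact: Rle_trans h0 h2.
rewrite e1 in h1; have := hL (size p + expn 2 K)%nat.
rewrite -RminusE in h1 => h; have h' : (sum_f_R0 A (size p + expn 2 K) <= L)%R := h; lra.
Qed.

Local Close Scope ring_scope.
Local Open Scope R_scope.

Lemma K_le_expn K : (K <= expn 2 K)%nat.
Proof. apply: ltnW; exact: ltn_expl. Qed.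

Lemma sum_mono (A : nat -> R) : (forall i, 0 <= A i) ->
  forall n k, sum_f_R0 A n <= sum_f_R0 A (n + k).
Proof.
move=> hA n; elim=> [|k IH]; first by rewrite addn0; lra.
rewrite addnS /=; have := hA (n + k).+1; lra.
Qed.

Lemma analytic (t x : R) : Rabs x < 1 ->
  exists S : R,
    infinite_sum (fun n => (evalR (stern n) t * x ^ n)%R) S /\
    Un_cv (fun K => (x * stern_prodR t x K)%R) S.
Proof.
move=> hx.
have hs : 0 <= Rabs t by apply: Rabs_pos.
have hr : 0 <= Rabs x < 1 by split; [apply: Rabs_pos | lra].
pose A := fun i => b (Rabs t) i * Rabs x ^ i.
pose a := fun i => b t i * x ^ i.
have hA : forall i, 0 <= A i.
  move=> i; apply: Rmult_le_pos; [exact: b_nonneg | apply: pow_le; lra].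
have haA : forall i, Rabs (a i) <= A i.
  move=> i; rewrite /a /A Rabs_mult -RPow_abs.
  apply: Rmult_le_compat_r; [apply: pow_le; lra | exact: b_abs].
have hgA : Un_growing (sum_f_R0 A).
  by move=> n /=; have := hA n.+1; lra.
pose Bd := Rabs x * exp ((Rabs t + 1) / (1 - Rabs x)).
have hbA : forall n, sum_f_R0 A n <= Bd.
  move=> n; apply: Rle_trans (sum_mono hA n (expn 2 n - n)) _.
  have -> : (n + (expn 2 n - n))%nat = expn 2 n by have := K_le_expn n; lia.
  apply: Rle_trans (psum_bound n hs hr) _.
  have [_ h] := prod_bound' n hs hr.
  apply: Rmult_le_compat_l => //; lra.
have [L hL] : {L | Un_cv (sum_f_R0 A) L}.
  apply: growing_cv => //; exists Bd => y [i ->]; exact: hbA.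
have hPL := growing_ineq _ _ hgA hL.
pose C := fun i => a i + A i.
have hC : forall i, 0 <= C i /\ a i <= A i.
  move=> i; have := haA i; have := Rle_abs (a i); have := Rle_abs (- a i).
  rewrite Rabs_Ropp /C; lra.
have hgC : Un_growing (sum_f_R0 C).
  by move=> n /=; have := hC n.+1; lra.
have [LC hLC] : {L | Un_cv (sum_f_R0 C) L}.
  apply: growing_cv => //; exists (2 * L) => y [i ->].
  rewrite /C plus_sum.
  have : sum_f_R0 a i <= sum_f_R0 A i by apply: sum_Rle => j _; exact: (proj2 (hC j)).
  have := hPL i; lra.
have hPa : Un_cv (sum_f_R0 a) (LC - L).
  move=> e he; have [N hN] := CV_minus _ _ _ _ hLC hL e he.
  exists N => n hn; have := hN n hn.
  have -> : sum_f_R0 C n - sum_f_R0 A n = sum_f_R0 a n by rewrite /C plus_sum; lra.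
  by [].
exists (LC - L); split.
  move=> e he; have [N hN] := hPa e he; exists N => n hn.
  exact: hN.
move=> e he.
have he2 : e / 2 > 0 by lra.
have [N1 hN1] := hPa _ he2.
have [N2 hN2] := hL _ he2.
exists (N1 + N2)%nat => K hK.
have hKe := K_le_expn K.
have h1 := hN1 (expn 2 K) ltac:(lia).
have h2 := hN2 (expn 2 K) ltac:(lia).
have h3 := tail_bound K hPL.
have h4 := hPL (expn 2 K).
rewrite /R_dist /Rdist in h1 h2 *.
have := Rabs_triang (x * stern_prodR t x K - sum_f_R0 a (expn 2 K))
                    (sum_f_R0 a (expn 2 K) - (LC - L)).
have -> : x * stern_prodR t x K - sum_f_R0 a (expn 2 K) +
   (sum_f_R0 a (expn 2 K) - (LC - L)) = x * stern_prodR t x K - (LC - L) by ring.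
have h5 : Rabs (sum_f_R0 A (expn 2 K) - L) = L - sum_f_R0 A (expn 2 K).
  rewrite Rabs_left1; lra.
change (Rabs (x * stern_prodR t x K - sum_f_R0 a (expn 2 K))
   <= L - sum_f_R0 A (expn 2 K)) in h3.
lra.
Qed.

Theorem theorem3p1 :
  (forall n : nat, exists K0 : nat, forall K : nat, leq K0 K ->
      coefp n (stern_partial_prod K) = stern n)
  /\
  (forall t x : R, (Rabs x < 1)%R ->
     exists S : R,
       infinite_sum (fun n => (evalR (stern n) t * x ^ n)%R) S /\
       Un_cv (fun K => (x * stern_prodR t x K)%R) S).
Proof.
split; last exact: analytic.
move=> n; exists n => K hK.
have -> : coefp n (stern_partial_prod K) = stern (sel K n) by exact: coefQ.
rewrite /sel.
by have -> : (n <= expn 2 K)%nat by apply: leq_trans hK (K_le_expn K).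
Qed.
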